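(* Let $I\subseteq\mathbb{R}$ be an open interval, $f:I\to\mathbb{R}$ continuous, and let $X$ be a random variable on a probability space $(\Omega,\Sigma,\mu)$ such that (i) the range of $X$ is contained in $I$; (ii) the expectations $E(X)$ and $E(f(X))$ exist and are finite; (iii) $E(X)$ is a point of convexity of $f$ relative to $I$. Then $$f(E(X))\le\int_\Omega f(X(\omega))\,d\mu(\omega).$$
   Context: A point $p\in I$ is a point of convexity of $f$ relative to $I$ if $f(p)\le\sum_{k=1}^n\lambda_k f(x_k)$ for every finite family of points $x_1,\dots,x_n\in I$ and positive weights $\lambda_1,\dots,\lambda_n$ with $\sum_k\lambda_k=1$ and $\sum_k\lambda_k x_k=p$. *)

(* Defs.v *)
From HB Require Import structures.
From mathcomp Require Import all_boot all_order all_algebra.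
From mathcomp Require Import all_classical all_reals all_analysis.
Set Implicit Arguments. Unset Strict Implicit. Unset Printing Implicit Defensive.
Import Order.TTheory GRing.Theory Num.Theory numFieldNormedType.Exports.
Local Open Scope classical_set_scope.
Local Open Scope ring_scope.

Definition point_of_convexity (R : realType) (f : R -> R) (I : set R) (p : R) :=
  I p /\
  forall (n : nat) (x lam : 'I_n -> R),
    (forall k, I (x k)) -> (forall k, 0 < lam k) ->
    \sum_(k < n) lam k = 1 -> \sum_(k < n) lam k * x k = p ->
    f p <= \sum_(k < n) lam k * f (x k).

Definition open_interval (R : realType) (I : set R) := open I /\ is_interval I.

(* Main.v *)
Require Import Defs.
From HB Require Import structures.
From mathcomp Require Import all_boot all_order all_algebra.
From mathcomp Require Import ring lra.
From mathcomp Require Import all_classical all_reals all_analysis.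
Import Order.TTheory GRing.Theory Num.Theory numFieldNormedType.Exports.
Local Open Scope classical_set_scope.
Local Open Scope ring_scope.

Lemma slope_le (R : realType) (I : set R) (f : R -> R) p a b :
  point_of_convexity f I p -> I a -> I b -> a < p -> p < b ->
  (f p - f a) / (p - a) <= (f b - f p) / (b - p).
Proof.
move=> [Ip H] Ia Ib ap pb.
have ba : 0 < b - a by lra.
pose x := fun k : 'I_2 => if k == ord0 then a else b.
pose lam := fun k : 'I_2 => if k == ord0 then (b - p) / (b - a) else (p - a) / (b - a).
have := H 2 x lam.
rewrite !big_ord_recl !big_ord0 /x /lam /=.
have e1 : (b - p) / (b - a) + ((p - a) / (b - a) + 0) = 1.
  by field; lra.
have e2 : (b - p) / (b - a) * a + ((p - a) / (b - a) * b + 0) = p.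
  by field; lra.
move=> /(_ _ _ e1 e2).
have /[swap]/[apply] : forall k : 'I_2, I (if k == ord0 then a else b).
  by move=> k; case: ifP.
have /[swap]/[apply] : forall k : 'I_2, 0 < (if k == ord0 then (b - p) / (b - a) else (p - a) / (b - a)).
  by move=> k; case: ifP => _; apply: divr_gt0; lra.
move=> Hc.
have Hc' : (b - a) * f p <= (b - p) * f a + (p - a) * f b.
  have := ler_wpM2l (ltW ba) Hc.
  have -> : (b - a) * ((b - p) / (b - a) * f a + ((p - a) / (b - a) * f b + 0)) = (b - p) * f a + (p - a) * f b.
    by field; lra.
  by [].
rewrite ler_pdivrMr; last lra.
rewrite mulrAC ler_pdivlMr; last lra.
nra.
Qed.

Lemma support (R : realType) (I : set R) (f : R -> R) p :
  open I -> point_of_convexity f I p ->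
  exists c, forall x, I x -> f p + c * (x - p) <= f x.
Proof.
move=> oI pc; have Ip := pc.1.
have : nbhs p I by exact: oI.
move=> /nbhs_ballP[e /= e0 Be].
have Ia : I (p - e / 2).
  apply: Be; rewrite /ball /= (_ : p - (p - e/2) = e/2); last by field. rewrite ger0_norm; lra.
have Ib : I (p + e / 2).
  apply: Be; rewrite /ball /= (_ : p - (p + e/2) = - (e/2)); last by field. rewrite normrN ger0_norm; lra.
pose L := [set s | exists a, [/\ I a, a < p & s = (f p - f a) / (p - a)]].
have Lub : forall b, I b -> p < b -> ubound L ((f b - f p) / (b - p)).
  move=> b Ib' pb s; rewrite /L /= => -[a [Ia' ap ->]]; exact: (slope_le _ _ _ _ _ _ pc Ia' Ib' ap pb).
have L0 : L !=set0.
  by exists ((f p - f (p - e / 2)) / (p - (p - e / 2))), (p - e / 2); split => //; lra.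
have hL : has_ubound L by exists ((f (p + e/2) - f p) / (p + e/2 - p)); apply: Lub => //; lra.
exists (sup L) => x Ix.
have [xp|px|->] := ltgtP x p.
- have : (f p - f x) / (p - x) <= sup L.
    by apply: ub_le_sup => //; exists x; split.
  rewrite ler_pdivrMr; last lra.
  nra.
- have : sup L <= (f x - f p) / (x - p) by apply: ge_sup => //; apply: Lub.
  rewrite ler_pdivlMr; last lra.
  nra.
- by rewrite subrr mulr0 addr0.
Qed.

Theorem theorem4 (R : realType) (I : set R) (f : R -> R)
  (d : measure_display) (T : measurableType d) (P : probability T R)
  (X : {RV P >-> R}) :
  open_interval I ->
  (forall x, I x -> {for x, continuous f}) ->
  (forall w, I (X w)) ->
  P.-integrable setT (EFin \o X) ->
  P.-integrable setT (EFin \o (f \o X)) ->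
  point_of_convexity f I (fine 'E_P[X]) ->
  ((f (fine 'E_P[X]))%:E <= 'E_P[f \o X])%E.
Proof.
move=> [oI _] _ IX iX ifX pc.
set p := fine 'E_P[X]%E.
have Ep : ('E_P[X] = p%:E)%E.
  by rewrite /p fineK // unlock; exact: integrable_fin_num.
have [c hc] := support _ _ _ _ oI pc.
have i1 : P.-integrable setT (EFin \o cst (f p - c * p)).
  exact: finite_measure_integrable_cst.
have i2 : P.-integrable setT (EFin \o (fun w => c * X w)).
  apply: (eq_integrable measurableT _ _ _ (integrableZl measurableT c iX)) => w _ /=; by rewrite EFinM.
have i3 : P.-integrable setT (EFin \o (cst (f p - c * p) \+ (fun w => c * X w))).
  apply: (eq_integrable measurableT _ _ _ (integrableD measurableT i1 i2)) => w _ /=; by rewrite EFinD.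
pose g := cst (f p - c * p) \+ (fun w => c * X w).
have -> : (f p)%:E = (\int[P]_w (EFin \o g) w)%E.
  rewrite integralD_EFin //.
  rewrite -[Y in (Y + _)%E]/(\int[P]_x (cst ((f p - c * p)%:E)) x)%E.
  have PT : ((P : {measure set T -> \bar R}) setT = 1)%E by exact: probability_setT.
  rewrite integral_cst // PT.
  rewrite mule1.
  rewrite -[Y in (_ + Y)%E]/(\int[P]_x ((c%:E) * (X x)%:E))%E.
  rewrite integralZl //.
  move: Ep; rewrite unlock => ->.
  by rewrite -EFinM -EFinD; congr (_%:E); ring.
rewrite unlock; apply: le_integral => // w _ /=.
rewrite lee_fin /g /= -/p; have := hc _ (IX w); rewrite -/p; lra.
Qed.
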